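(* The pair of graded graphs $(\mathbf{Comp}_\bullet,\mathbf{U},\mathbf{V})$ is $2$-dual, that is $\mathbf{V}^\star\mathbf{U}-\mathbf{U}\mathbf{V}^\star=2I$, where $I$ is the identity map.
   Context: $\mathbb{K}$ is a field of characteristic zero. $\mathbf{Comp}$ is the set of all nonempty words over $\{0,1\}$ beginning with $0$ (the elements of the operad of integer compositions), graded by rank $|u|-1$; $\mathbf{Comp}_\bullet$ denotes this graded set. The prefix graph and twisted prefix graph of this operad are given by the linear maps on $\mathbb{K}\langle\mathbf{Comp}\rangle$ (basis: these words) $$\mathbf{U}(u)=\sum_{i\in[|u|]}\big(u_1\cdots u_i\,0\,u_{i+1}\cdots u_{|u|}+u_1\cdots u_i\,1\,u_{i+1}\cdots u_{|u|}\big),\qquad \mathbf{V}(u)=u0+u1.$$ $\mathbf{V}^\star$ is the adjoint of $\mathbf{V}$ for the scalar product making the words orthonormal. *)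

(* Defs.v *)
From HB Require Import structures.
From mathcomp Require Import all_boot all_order all_algebra.
Set Implicit Arguments. Unset Strict Implicit. Unset Printing Implicit Defensive.
Import Order.TTheory GRing.Theory Num.Theory.
Local Open Scope ring_scope.

(* Words over {0,1}: the letter 0 is [false], the letter 1 is [true]. *)
Definition word := seq bool.

Definition is_comp (u : word) : bool :=
  if u is b :: _ then ~~ b else false.

Definition comp_of_size (n : nat) : seq word :=
  if n is m.+1 then [seq false :: tval t | t <- enum {: m.-tuple bool}] else [::].

(* Elements of K<Comp>: finite formal linear combinations of words,
   represented by a list of (coefficient, word) pairs; two such lists denote
   the same vector iff they have the same coefficients [coef]. *)
Definition vec (K : nzRingType) := seq (K * word).

Definition coef (K : nzRingType) (v : vec K) (w : word) : K :=
  \sum_(p <- v) (p.2 == w)%:R * p.1.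

Definition lin (K : nzRingType) (f : word -> vec K) (v : vec K) : vec K :=
  flatten [seq [seq (p.1 * q.1, q.2) | q <- f p.2] | p <- v].

Definition ins (i : nat) (b : bool) (u : word) : word :=
  take i u ++ b :: drop i u.

(* U(u) = sum_{i in [|u|]} (u_1..u_i 0 u_{i+1}..  +  u_1..u_i 1 u_{i+1}..) *)
Definition U_basis (K : nzRingType) (u : word) : vec K :=
  [seq (1, ins i b u) | i <- iota 1 (size u), b <- [:: false; true]].

Definition V_basis (K : nzRingType) (u : word) : vec K :=
  [:: (1, rcons u false); (1, rcons u true)].

(* Adjoint of V for the scalar product making words orthonormal:
   V*(u) = sum_{w in Comp} <V(w), u> w.  Only words w with |w| <= |u| can
   satisfy <V(w),u> <> 0 (V increases length), so the sum is restricted to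
   the (finitely many) elements of Comp of length 1..|u|. *)
Definition Vstar_basis (K : nzRingType) (u : word) : vec K :=
  [seq (coef (V_basis K w) u, w) | n <- iota 1 (size u), w <- comp_of_size n].

Definition Uop (K : nzRingType) : vec K -> vec K := lin (@U_basis K).
Definition Vop (K : nzRingType) : vec K -> vec K := lin (@V_basis K).
Definition Vstar (K : nzRingType) : vec K -> vec K := lin (@Vstar_basis K).

(* Main.v *)
Require Import Defs.
From HB Require Import structures.
From mathcomp Require Import all_boot all_order all_algebra.
From mathcomp Require Import zify ring.
Import GRing.Theory.
Local Open Scope ring_scope.

Section Aux.
Variable K : fieldType.

Lemma coef_nil (w : word) : coef ([::] : vec K) w = 0.
Proof. by rewrite /coef big_nil. Qed.

Lemma coef_cons (p : K * word) v w : coef (p :: v) w = (p.2 == w)%:R * p.1 + coef v w.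
Proof. by rewrite /coef big_cons. Qed.

Lemma coef_cat (v1 v2 : vec K) w : coef (v1 ++ v2) w = coef v1 w + coef v2 w.
Proof. by rewrite /coef big_cat. Qed.

Lemma coef_flatten (ss : seq (vec K)) w : coef (flatten ss) w = \sum_(s <- ss) coef s w.
Proof.
elim: ss => [|s ss IH]; first by rewrite big_nil coef_nil.
by rewrite /= coef_cat IH big_cons.
Qed.

Lemma coef_map (T : Type) (s : seq T) (a : T -> K) (b : T -> word) w :
  coef [seq (a x, b x) | x <- s] w = \sum_(x <- s) (b x == w)%:R * a x.
Proof. by rewrite /coef big_map. Qed.

Lemma coef_lin (f : word -> vec K) (v : vec K) w :
  coef (lin f v) w = \sum_(p <- v) p.1 * coef (f p.2) w.
Proof.
rewrite /lin coef_flatten big_map; apply: eq_bigr => p _.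
rewrite coef_map /coef big_distrr /=; apply: eq_bigr => q _.
by rewrite mulrCA.
Qed.

Lemma sum_eq_uniq (T : eqType) (s : seq T) (x0 : T) (F : T -> K) :
  uniq s -> \sum_(x <- s) (x == x0)%:R * F x = (x0 \in s)%:R * F x0.
Proof.
elim: s => [|y s IH] /=; first by rewrite big_nil mul0r.
case/andP => ys us; rewrite big_cons IH // in_cons.
case: (eqVneq y x0) => [<-|ne] /=.
  by rewrite (negbTE ys) mul0r addr0 mul1r.
by rewrite mul0r add0r.
Qed.

Lemma mem_comp_of_size n w : (w \in comp_of_size n) = is_comp w && (size w == n).
Proof.
case: n => [|m] /=; first by rewrite in_nil; case: w => [|[] t].
apply/mapP/idP.
  by case=> t _ ->; rewrite /= size_tuple eqxx.
case: w => [|[] t] //= /eqP[st]; exists (Tuple (introT eqP st)) => //.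
by rewrite mem_enum.
Qed.

Lemma uniq_comp_of_size n : uniq (comp_of_size n).
Proof.
case: n => [|m] //=; rewrite map_inj_uniq ?enum_uniq //.
by move=> t1 t2 [] /val_inj.
Qed.

Lemma coef_V (u w : word) :
  coef (V_basis K w) u = (rcons w false == u)%:R + (rcons w true == u)%:R.
Proof. by rewrite /V_basis !coef_cons coef_nil /= !mulr1 addr0. Qed.

Lemma coef_Vstar_basis (u w : word) :
  coef (Vstar_basis K u) w = (is_comp w)%:R * coef (V_basis K w) u.
Proof.
rewrite /Vstar_basis coef_flatten big_map.
under eq_bigr => n _ do rewrite coef_map sum_eq_uniq ?uniq_comp_of_size // mem_comp_of_size.
have -> : \sum_(i <- iota 1 (size u)) (is_comp w && (size w == i))%:R * coef (V_basis K w) u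
   = \sum_(i <- iota 1 (size u)) (i == size w)%:R * ((is_comp w)%:R * coef (V_basis K w) u).
  by apply: eq_bigr => i _; case: (is_comp w); rewrite /= ?mul1r ?mul0r ?mulr0 // eq_sym.
rewrite sum_eq_uniq ?iota_uniq // mem_iota.
case: w => [|a t] /=; first by rewrite !mul0r.
rewrite add1n ltnS.
case: (ltnP (size t) (size u)) => h; first by rewrite mul1r.
rewrite mul0r coef_V.
have ne : forall b, (rcons (a :: t) b == u) = false.
  move=> b; apply/negbTE/eqP => eu; move: h; rewrite -eu size_rcons /=.
  by rewrite ltnNge ltnW.
by rewrite !ne addr0 mulr0.
Qed.

Lemma coef_Vstar (v : vec K) w :
  coef (Vstar v) w = (is_comp w)%:R * (coef v (rcons w false) + coef v (rcons w true)).
Proof.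
rewrite /Vstar coef_lin.
under eq_bigr => p _ do rewrite coef_Vstar_basis coef_V.
rewrite /coef -big_split big_distrr /=; apply: eq_bigr => p _.
rewrite ![p.2 == _]eq_sym; ring.
Qed.

Definition del (i : nat) (w : word) : word := take i w ++ drop i.+1 w.

Lemma size_ins i b u : size (ins i b u) = (size u).+1.
Proof. by rewrite /ins size_cat /= addnS size_take_min size_drop; congr _.+1; lia. Qed.

Lemma size_del i w : (i < size w)%N -> size (del i w) = (size w).-1.
Proof. move=> h; rewrite /del size_cat size_take_min size_drop; lia. Qed.

Lemma ins_nth i b u : (i <= size u)%N -> nth false (ins i b u) i = b.
Proof.
move=> h; rewrite /ins nth_cat size_take_min.
have -> : minn i (size u) = i by lia.
by rewrite ltnn subnn.
Qed.

Lemma del_ins i b u : (i <= size u)%N -> del i (ins i b u) = u.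
Proof.
move=> h; rewrite /del /ins.
have st : size (take i u) = i by rewrite size_take_min; lia.
rewrite take_size_cat // drop_cat st ltnNge leqnSn /= subSnn /=.
by rewrite drop0 cat_take_drop.
Qed.

Lemma ins_del i w : (i < size w)%N -> ins i (nth false w i) (del i w) = w.
Proof.
move=> h; rewrite /ins /del.
have st : size (take i w) = i by rewrite size_take_min; lia.
rewrite take_size_cat // drop_size_cat //.
by rewrite -drop_nth // cat_take_drop.
Qed.

Lemma sum_ins i (u w : word) : (i <= size u)%N -> (i < size w)%N ->
  \sum_(b <- [:: false; true]) ((ins i b u == w)%:R : K) = (del i w == u)%:R.
Proof.
move=> hu hw; rewrite big_cons big_seq1.
case: (eqVneq (del i w) u) => [<-|ne].
  have E : forall b, (ins i b (del i w) == w) = (b == nth false w i).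
    move=> b; apply/eqP/eqP => [e|->]; last exact: ins_del.
    have hd : (i <= size (del i w))%N by rewrite size_del // -ltnS (ltn_predK hw).
    by rewrite -{1}(@ins_nth i b (del i w) hd) e.
  by rewrite !E; case: (nth false w i); rewrite /= ?addr0 ?add0r.
have E : forall b, (ins i b u == w) = false.
  by move=> b; apply/negbTE/eqP => e; move: ne; rewrite -e del_ins ?eqxx.
by rewrite !E addr0.
Qed.

Lemma coef_U_basis (u w : word) : coef (U_basis K u) w =
  \sum_(i <- iota 1 (size u)) \sum_(b <- [:: false; true]) ((ins i b u == w)%:R : K).
Proof.
rewrite /U_basis coef_flatten big_map; apply: eq_bigr => i _.
by rewrite coef_map; apply: eq_bigr => b _; rewrite mulr1.
Qed.

Lemma count_U (u w : word) :
  \sum_(i <- iota 1 (size u)) \sum_(b <- [:: false; true]) ((ins i b u == w)%:R : K)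
  = \sum_(i <- iota 1 (size w).-1) ((del i w == u)%:R : K).
Proof.
case: (eqVneq (size w) (size u).+1) => [e|ne].
  rewrite e /=; rewrite !big_seq; apply: eq_bigr => i; rewrite mem_iota => /andP[h1 h2].
  by apply: sum_ins; lia.
rewrite big1_seq; last first.
  move=> i _; rewrite big1_seq // => b _; case: eqP => // e.
  by move: ne; rewrite -e size_ins eqxx.
rewrite big1_seq // => i /andP[_]; rewrite mem_iota => /andP[h1 h2].
case: eqP => // e; move: ne; rewrite -e size_del; last by lia.
move=> /eqP ne'; exfalso; lia.
Qed.

Lemma coef_U (v : vec K) w :
  coef (Uop v) w = \sum_(i <- iota 1 (size w).-1) coef v (del i w).
Proof.
rewrite /Uop coef_lin.
under eq_bigr => p _ do rewrite coef_U_basis count_U.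
rewrite /coef exchange_big /=; apply: eq_bigr => i _.
rewrite big_distrr /=; apply: eq_bigr => p _; by rewrite mulrC eq_sym.
Qed.

End Aux.

Lemma del_rcons i (w : word) b : (i < size w)%N -> del i (rcons w b) = rcons (del i w) b.
Proof.
move=> h; rewrite /del drop_rcons // -cats1 takel_cat; last exact: ltnW.
by rewrite rcons_cat.
Qed.

Lemma del_last (w : word) b : del (size w) (rcons w b) = w.
Proof.
rewrite /del -cats1 take_size_cat // drop_cat ltnNge leqnSn /= subSnn /=.
by rewrite cats0.
Qed.

Lemma is_comp_del i (w : word) : (0 < i)%N -> is_comp (del i w) = is_comp w.
Proof. by case: i => // i _; case: w. Qed.

Theorem proposition4p8 (K : fieldType) (charK0 : [pchar K] =i pred0)
    (v : vec K) :
  all (fun p => is_comp p.2) v ->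
  forall w : word,
    coef (Vstar (Uop v)) w - coef (Uop (Vstar v)) w = 2 * coef v w.
Proof.
move=> hv w.
have hcw : ~~ is_comp w -> coef v w = 0.
  move=> nc; rewrite /coef big1_seq // => p /andP[_ pv].
  case: eqP => [e|]; last by rewrite mul0r.
  by move/allP: hv => /(_ p pv); rewrite e (negbTE nc).
rewrite coef_Vstar !coef_U.
have [/size0nil w0|wpos] := posnP (size w).
  by rewrite w0 in hcw *; rewrite /= big_nil mul0r hcw // mulr0 big_nil subr0.
have e : iota 1 (size w) = rcons (iota 1 (size w).-1) (size w).
  have iS : forall m n, iota m n.+1 = rcons (iota m n) (m + n)%N.
    by move=> m n; rewrite -cats1 -[n.+1]addn1 iotaD.
  by rewrite -{1}(prednK wpos) iS add1n prednK.
rewrite !size_rcons -!pred_Sn !e !big_rcons !del_last.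
have S : forall b, \sum_(j <- iota 1 (size w).-1) coef v (del j (rcons w b))
    = \sum_(j <- iota 1 (size w).-1) coef v (rcons (del j w) b).
  move=> b; rewrite !big_seq; apply: eq_bigr => j; rewrite mem_iota => /andP[_ h].
  by rewrite del_rcons //; lia.
have T : \sum_(i <- iota 1 (size w).-1) coef (Vstar v) (del i w)
    = (is_comp w)%:R * (\sum_(j <- iota 1 (size w).-1) coef v (rcons (del j w) false)
         + \sum_(j <- iota 1 (size w).-1) coef v (rcons (del j w) true)).
  rewrite -big_split big_distrr /= !big_seq; apply: eq_bigr => j.
  by rewrite mem_iota => /andP[h _]; rewrite coef_Vstar is_comp_del.
rewrite T -!S.
case: (boolP (is_comp w)) => c.
  rewrite /=; ring.
rewrite hcw //=; ring.
Qed.
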